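(* Let $G$ be a finite, simple, connected graph with $n$ vertices $v_1,\ldots,v_n$ and $m$ edges, let $a\in[0,1]$ and $b\in\mathbb{R}$, and let $\tilde{\mathbf U}$ be the generalized Grover matrix of $G$ with parameters $a,b$. Then \[ \det(\mathbf I_{2m}-u\tilde{\mathbf U})=\frac{(1-b^2u^2)^{m-n}}{\prod_{i=1}^n \deg v_i}\det\Big(\mathbf D\big\{(1+b(2a-b)u^2)\mathbf I_n+b(b-a)u^2\mathbf D\big\}-u\mathbf A_d\Big), \] where $\mathbf D$ is the $n\times n$ diagonal matrix with $\mathbf D_{v_iv_i}=\deg v_i$, and $\mathbf A_d=(A^{(d)}_{uv})_{u,v\in V(G)}$ is the $n\times n$ matrix with $A^{(d)}_{uv}=(2-\deg u)a+b\deg u$ if $u$ and $v$ are adjacent, and $A^{(d)}_{uv}=0$ otherwise.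
   Context: For a simple graph $G$, $D(G)$ denotes the set of $2m$ arcs: for each edge $uv$ both $(u,v)$ and $(v,u)$. For an arc $e=(u,v)$, $o(e)=u$, $t(e)=v$, $e^{-1}=(v,u)$; $d_v=\deg v$ is the degree of $v$. For $a\in[0,1]$, $b\in\mathbb R$, the generalized Grover matrix $\tilde{\mathbf U}=(\tilde U_{ef})_{e,f\in D(G)}$ is the $2m\times 2m$ matrix with $\tilde U_{ef}=(2/d_{t(f)}-1)a+b$ if $t(f)=o(e)$ and $f\neq e^{-1}$; $\tilde U_{ef}=(2/d_{t(f)}-1)a$ if $f=e^{-1}$; and $\tilde U_{ef}=0$ otherwise. The identity is an identity of polynomials (rational functions) in the variable $u$. *)

(* Defs.v *)
From HB Require Import structures.
From mathcomp Require Import all_boot all_order all_algebra.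
Set Implicit Arguments. Unset Strict Implicit. Unset Printing Implicit Defensive.
Import Order.TTheory GRing.Theory Num.Theory.
Local Open Scope ring_scope.

Definition simple_graph (V : finType) (e : rel V) : Prop :=
  symmetric e /\ irreflexive e.

Definition connected_graph (V : finType) (e : rel V) : Prop :=
  forall x y : V, connect e x y.

Definition deg (V : finType) (e : rel V) (v : V) : nat := #|[pred w | e v w]|.

Definition arcs (V : finType) (e : rel V) : {pred V * V} := [pred p : V * V | e p.1 p.2].

(* number of edges m (the 2m arcs come in pairs) *)
Definition nedges (V : finType) (e : rel V) : nat := #|arcs e| %/ 2.

Section Grover.
Variables (R : realFieldType) (V : finType) (e : rel V) (a b : R).

(* entry U_{EF} of the generalized Grover matrix, for arcs E=(o(E),t(E)), F *)
Definition grover_entry (E F : V * V) : R :=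
  if F.2 == E.1 then
    if F == (E.2, E.1) then ((2 / (deg e F.2)%:R) - 1) * a
    else ((2 / (deg e F.2)%:R) - 1) * a + b
  else 0.

Definition grover : 'M[R]_#|arcs e| :=
  \matrix_(i, j) grover_entry (enum_val i) (enum_val j).

Definition degmx : 'M[R]_#|V| :=
  \matrix_(i, j) if i == j then (deg e (enum_val i))%:R else 0.

Definition Admx : 'M[R]_#|V| :=
  \matrix_(i, j) if e (enum_val i) (enum_val j)
                 then (2 - (deg e (enum_val i))%:R) * a + b * (deg e (enum_val i))%:R
                 else 0.
End Grover.

(* Main.v *)
Require Import Defs.
From HB Require Import structures.
From mathcomp Require Import all_boot all_order all_algebra.
From mathcomp Require Import ring.
Set Implicit Arguments. Unset Strict Implicit. Unset Printing Implicit Defensive.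
Import Order.TTheory GRing.Theory Num.Theory.
Local Open Scope ring_scope.

Lemma sylv (K : comNzRingType) N n (x : K) (B : 'M[K]_(N, n)) (C : 'M[K]_(n, N)) :
  x ^+ n * \det (x%:M - B *m C) = x ^+ N * \det (x%:M - C *m B).
Proof.
pose M := block_mx (x%:M : 'M_N) B C (1%:M : 'M_n).
have h1 : \det M = \det (x%:M - B *m C).
  have -> : M = block_mx 1%:M B 0 1%:M *m block_mx (x%:M - B *m C) 0 C 1%:M.
    rewrite mulmx_block !mul1mx !mul0mx !mulmx1 ?addr0 ?add0r.
    by rewrite subrK.
  by rewrite det_mulmx det_ublock det_lblock !det1 !mul1r mulr1.
have h2 : block_mx 1%:M 0 (- C) x%:M *m M = block_mx x%:M B 0 (x%:M - C *m B).
  rewrite mulmx_block !mul1mx !mul0mx ?add0r ?addr0.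
  by rewrite mul_mx_scalar mul_scalar_mx scalerN addNr mulmx1 addrC mulNmx.
have := congr1 determinant h2.
rewrite det_mulmx det_lblock det_ublock det1 mul1r h1 !det_scalar => ->.
by rewrite mulrC.
Qed.

Section Inv.
Variables (K : comNzRingType) (N : nat) (s : 'I_N -> 'I_N).
Hypothesis sK : involutive s.
Hypothesis sF : forall i, s i != i.

Lemma sum_sel (P : pred 'I_N) (F : 'I_N -> K) j :
  \sum_k ((P k && (j == s k))%:R * F k) = (P (s j))%:R * F (s j).
Proof.
rewrite (bigD1 (s j)) //= sK eqxx andbT big1 ?addr0 // => k hk.
have -> : (j == s k) = false.
  by apply/negbTE; apply: contra hk => /eqP ->; rewrite sK.
by rewrite andbF mul0r.
Qed.

Lemma det_inv (c : K) :
  \det (1%:M - c *: \matrix_(i,j) ((j == s i)%:R : K)) = (1 - c^+2) ^+ #|[pred i | (s i < i)%N]|.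
Proof.
set J := \matrix_(i,j) _.
pose E := \matrix_(j,i) (((i < s i)%N && (j == s i))%:R : K).
pose L := 1%:M + c *: E.
have dL : \det L = 1.
  rewrite det_trig; last first.
    apply/is_trig_mxP => r k hrk; rewrite !mxE.
    have -> : (r == k) = false by apply/negbTE; rewrite neq_ltn hrk.
    case: ltnP => hk //=; last by rewrite mulr0 addr0.
    case: eqP => [hr|]; last by rewrite mulr0 addr0.
    by move: hrk; rewrite hr ltnNge ltnW.
  apply: big1 => i _; rewrite !mxE eqxx.
  by rewrite eq_sym (negbTE (sF i)) andbF mulr0 addr0.
have hLM : L *m (1%:M - c *: J) = \matrix_(j,l)
    (if (s j < j)%N then (j == l)%:R * (1 - c^+2) else (j == l)%:R - c * (l == s j)%:R).
  apply/matrixP => j l; rewrite mulmxDl mul1mx -scalemxAl !mxE.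
  under eq_bigr => k _ do rewrite [E _ _]mxE.
  rewrite sum_sel sK !mxE sK (eq_sym (s j) l).
  case: ifP => h; last by rewrite mul0r mulr0 addr0.
  case: (eqVneq j l) => [<-|hjl]; first by rewrite eq_sym (negbTE (sF j)) ?eqxx /= ?mulr1n ?mulr0n; ring.
  by rewrite /= ?mulr1n ?mulr0n; ring.
have hLT : L^T = 1%:M + c *: E^T by apply/matrixP => i k; rewrite !mxE eq_sym.
have hfin : L *m (1%:M - c *: J) *m L^T =
    diag_mx (\row_i (if (s i < i)%N then 1 - c^+2 else 1)).
  apply/matrixP => j l; rewrite hLT mulmxDr mulmx1 -scalemxAr hLM !mxE.
  under eq_bigr => k _ do rewrite !mxE mulrC.
  rewrite sum_sel sK ?mxE.
  case: (eqVneq l (s j)) => [->|hl].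
    rewrite sK (eq_sym j (s j)) (negbTE (sF j)) eqxx /=.
    case: ifP => h /=.
      have -> : (j < s j)%N = false by apply/negbTE; rewrite -leqNgt ltnW.
      by rewrite /= ?mulr1n ?mulr0n; ring.
    have -> : (j < s j)%N.
      by rewrite ltn_neqAle eq_sym sF /= leqNgt h.
    by rewrite /= ?mulr1n ?mulr0n; ring.
  have -> : (j == s l) = false.
    by apply/negbTE; apply: contra hl => /eqP ->; rewrite sK.
  rewrite (inj_eq (can_inj sK)) ?(negbTE hl).
  case: (eqVneq j l) => [<-|hjl]; case: ifP => h; rewrite /= ?mulr1n ?mulr0n; ring.
have := congr1 determinant hfin.
rewrite !det_mulmx det_tr dL mul1r mulr1 det_diag => ->.
rewrite (eq_bigr (fun i => if (s i < i)%N then 1 - c^+2 else 1)); last by move=> i _; rewrite mxE.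
by rewrite -big_mkcond prodr_const.
Qed.
Lemma card_half : (#|[pred i | (s i < i)%N]| + #|[pred i | (s i < i)%N]|)%N = N.
Proof.
have e1 : #|[pred i | (s i < i)%N]| = #|[pred i : 'I_N | (i < s i)%N]|.
  rewrite -!sum1_card (reindex_inj (can_inj sK)) /=.
  by apply: eq_bigl => i; rewrite !inE sK.
rewrite [X in (_ + X)%N]e1.
have e2 : [pred i : 'I_N | (i < s i)%N] =i [predC [pred i | (s i < i)%N]].
  by move=> i; rewrite !inE ltnNge leq_eqVlt negb_or sF.
by rewrite (eq_card e2) cardC card_ord.
Qed.
End Inv.

Lemma sum_delta (K : nzSemiRingType) (T : finType) (x : T) (F : T -> K) :
  \sum_j ((x == j)%:R * F j) = F x.
Proof.
rewrite (bigD1 x) //= eqxx mul1r big1 ?addr0 // => j hj.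
by rewrite eq_sym (negbTE hj) mul0r.
Qed.

Lemma alg_id (K : comNzRingType) N (M0 J : 'M[K]_N) (x b : K) : J *m J = 1%:M ->
  (1%:M - x *: (M0 - b *: J)) *m (1%:M - (b * x) *: J) =
  (1 - b ^+ 2 * x ^+ 2)%:M - x *: (M0 *m (1%:M - (b * x) *: J)).
Proof.
move=> JJ.
rewrite !mulmxBl !mulmxBr !mul1mx !mulmx1 -!scalemxAl -!scalemxAr !mulmxBl.
rewrite -!scalemxAl JJ.
move: (M0 *m J) => A1.
apply/matrixP => i j; rewrite !mxE.
case: (i == j); rewrite /= ?mulr1n ?mulr0n; ring.
Qed.

Section Main.
Variables (R : realFieldType) (V : finType) (e : rel V) (a b : R).
Hypothesis esym : symmetric e.
Hypothesis eirr : irreflexive e.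
Local Notation K := {poly R}.
Local Notation N := #|arcs e|.
Local Notation n := #|V|.

Lemma arcP (i : 'I_N) : e (enum_val i).1 (enum_val i).2.
Proof. exact: (enum_valP i). Qed.

Lemma swap_arc (i : 'I_N) : ((enum_val i).2, (enum_val i).1) \in arcs e.
Proof. by rewrite unfold_in /= esym arcP. Qed.

Definition sw (i : 'I_N) : 'I_N :=
  enum_rank_in (enum_valP i) ((enum_val i).2, (enum_val i).1).

Lemma ev_sw i : enum_val (sw i) = ((enum_val i).2, (enum_val i).1).
Proof. exact: (enum_rankK_in _ (swap_arc i)). Qed.

Lemma swK : involutive sw.
Proof. by move=> i; apply: enum_val_inj; rewrite !ev_sw /=; case: (enum_val i). Qed.

Lemma swF i : sw i != i.
Proof.
apply/eqP => h; have := ev_sw i; rewrite h => /(congr1 fst) /= h1.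
by have := arcP i; rewrite -h1 eirr.
Qed.

Lemma eq_sw (i j : 'I_N) : (j == sw i) = (enum_val j == ((enum_val i).2, (enum_val i).1)).
Proof. by rewrite -ev_sw (inj_eq (@enum_val_inj _ _)). Qed.

Lemma eq_rank (x : V) (w : 'I_n) : (x == enum_val w) = (enum_rank x == w).
Proof.
by apply/eqP/eqP => [->|<-]; [rewrite enum_valK | rewrite enum_rankK].
Qed.

Definition Sm : 'M[K]_(N, n) := \matrix_(i, v) ((enum_val i).1 == enum_val v)%:R.
Definition Tm : 'M[K]_(N, n) := \matrix_(i, v) ((enum_val i).2 == enum_val v)%:R.
Definition wv (v : V) : R := (2 / (deg e v)%:R - 1) * a + b.
Definition Wm : 'M[K]_n := diag_mx (\row_v (wv (enum_val v))%:P).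
Definition Jm : 'M[K]_N := \matrix_(i, j) (j == sw i)%:R.

Lemma JJ : Jm *m Jm = 1%:M.
Proof.
apply/matrixP => i k; rewrite !mxE.
under eq_bigr => j _ do rewrite !mxE eq_sym.
by rewrite sum_delta swK eq_sym.
Qed.

Lemma U_eq : map_mx polyC (grover e a b) = Sm *m Wm *m Tm^T - b%:P *: Jm.
Proof.
apply/matrixP => i j; rewrite /Wm mul_mx_diag !mxE.
under eq_bigr => k _ do rewrite !mxE eq_rank -mulrA.
rewrite sum_delta enum_rankK eq_sw /grover_entry.
case: (eqVneq (enum_val j) ((enum_val i).2, (enum_val i).1)) => [->|h] /=.
  by rewrite eqxx ?mulr1 ?mulr1n /wv polyCD addrK.
case: eqP => [->|_]; rewrite /= ?mulr0 ?mulr1 ?mulr0n ?mulr1n ?subr0 //.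
Qed.


Lemma sum_arc (x : V * V) : \sum_(k < N) ((enum_val k == x)%:R : K) = (x \in arcs e)%:R.
Proof.
case: (boolP (x \in arcs e)) => hx.
  rewrite (eq_bigr (fun k => ((enum_rank_in hx x == k)%:R * 1))) ?sum_delta //.
  move=> k _; rewrite mulr1; congr (nat_of_bool _ )%:R.
  by apply/idP/idP => /eqP h; apply/eqP; [move: (enum_valK_in hx k); rewrite h | rewrite -h enum_rankK_in].
rewrite big1 // => k _; case: eqP => // h.
by move: hx; rewrite -h enum_valP.
Qed.

Lemma sum_deg (y : V) : \sum_(k < N) (((enum_val k).2 == y)%:R : K) = (deg e y)%:R.
Proof.
transitivity (\sum_(k < N) \sum_(x1 : V) ((enum_val k == (x1, y))%:R : K)).
  apply: eq_bigr => k _.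
  rewrite (eq_bigr (fun x1 => (((enum_val k).1 == x1)%:R * ((enum_val k).2 == y)%:R))).
    by rewrite sum_delta.
  by move=> x1 _; case: (enum_val k) => p1 p2; rewrite xpair_eqE /= -natrM mulnb.
rewrite exchange_big /=.
under eq_bigr => x1 _ do rewrite sum_arc unfold_in /= esym.
rewrite /deg -sum1_card natr_sum [RHS]big_mkcond /=.
by apply: eq_bigr => x1 _; rewrite unfold_in /=; case: (e y x1).
Qed.

Lemma A0_eq : Tm^T *m Sm = \matrix_(v, w) (e (enum_val v) (enum_val w))%:R.
Proof.
apply/matrixP => v w; rewrite !mxE.
under eq_bigr => k _ do rewrite !mxE.
transitivity (\sum_(k < N) ((enum_val k == (enum_val w, enum_val v))%:R : K)).
  apply: eq_bigr => k _.
  by case: (enum_val k) => p1 p2; rewrite xpair_eqE /= -natrM mulnb andbC.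
by rewrite sum_arc unfold_in /= esym.
Qed.

Lemma D0_eq : Tm^T *m Jm *m Sm = diag_mx (\row_v (deg e (enum_val v))%:R).
Proof.
have hJS : Jm *m Sm = \matrix_(k, w) (((enum_val k).2 == enum_val w)%:R).
  apply/matrixP => k w; rewrite !mxE.
  under eq_bigr => j _ do rewrite !mxE eq_sym.
  by rewrite sum_delta ?mxE ev_sw.
rewrite -mulmxA hJS; apply/matrixP => v w; rewrite !mxE.
under eq_bigr => k _ do rewrite !mxE.
case: (eqVneq v w) => [<-|hvw] /=.
  rewrite mulr1n -(sum_deg (enum_val v)); apply: eq_bigr => k _.
  by case: eqP; rewrite /= ?mulr1n ?mulr0n ?mulr1 ?mulr0.
rewrite mulr0n big1 // => k _.
case: eqP => [->|]; last by rewrite mulr0n mul0r.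
by rewrite (inj_eq (@enum_val_inj _ _)) (negbTE hvw) mulr0.
Qed.

Lemma main_sec :
  let q := 1 - (b ^+ 2)%:P * 'X^2 : K in
  (\prod_(v : V) (deg e v)%:R)%:P * \det (1%:M - 'X *: map_mx polyC (grover e a b)) * q ^+ n
  = q ^+ (nedges e) * \det (map_mx polyC (degmx R e) *m ((1 + (b * (2 * a - b))%:P * 'X^2) *: 1%:M
        + ((b * (b - a))%:P * 'X^2) *: map_mx polyC (degmx R e)) - 'X *: map_mx polyC (Admx e a b)).
Proof.
move=> q.
set c := b%:P * 'X.
have hq : q = 1 - c ^+ 2 by rewrite /q /c exprMn polyC_exp.
have qnz : q != 0.
  apply/eqP => h; have := congr1 (fun p : K => p.[0]) h.
  by rewrite /q !hornerE /= !mulr0 subr0 => /eqP; rewrite oner_eq0.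
set k := #|[pred i | (sw i < i)%N]|.
have hk : (k + k)%N = N := card_half swK swF.
have hm : nedges e = k by rewrite /nedges -hk addnn -muln2 mulnK.
have hdetJ : \det (1%:M - c *: Jm) = q ^+ k by rewrite hq (det_inv swK swF c).
pose Cm := 'X *: (Wm *m Tm^T *m (1%:M - c *: Jm)).
have h1 : (1%:M - 'X *: map_mx polyC (grover e a b)) *m (1%:M - c *: Jm) = q%:M - Sm *m Cm.
  rewrite U_eq /c (alg_id _ _ _ JJ) /Cm -scalemxAr !mulmxA.
  by rewrite /q polyC_exp.
have h2 : Cm *m Sm = 'X *: (Wm *m (Tm^T *m Sm - c *: (Tm^T *m Jm *m Sm))).
  rewrite /Cm -scalemxAl; congr (_ *: _).
  rewrite -!mulmxA; congr (Wm *m _).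
  by rewrite mulmxBl mul1mx -scalemxAl mulmxBr -scalemxAr !mulmxA.
have h3 := sylv q Sm Cm.
have hdet : \det (1%:M - 'X *: map_mx polyC (grover e a b)) * q ^+ n
    = q ^+ k * \det (q%:M - Cm *m Sm).
  have := congr1 determinant h1; rewrite det_mulmx hdetJ => h.
  apply: (mulIf (expf_neq0 k qnz)).
  rewrite mulrAC h mulrC h3.
  by rewrite mulrAC -exprD hk.
rewrite -[_ * _ * q ^+ n]mulrA hdet hm h2 A0_eq D0_eq.
have hD : map_mx polyC (degmx R e) = diag_mx (\row_v ((deg e (enum_val v))%:R : K)).
  apply/matrixP => v w; rewrite !mxE.
  by case: eqP; rewrite /= ?mulr1n ?mulr0n ?polyC_natr ?polyC0.
have hP : (\prod_(v : V) (deg e v)%:R)%:P = \det (map_mx polyC (degmx R e)).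
  rewrite hD det_diag rmorph_prod /= (@reindex _ _ _ _ 'I_#|V| enum_val) /=; last first.
    by apply: onW_bij; exists enum_rank; [exact: enum_valK | exact: enum_rankK].
  by apply: eq_bigr => v _; rewrite mxE polyC_natr.
rewrite hP mulrCA -det_mulmx.
have hM : map_mx polyC (degmx R e) *m (q%:M - 'X *: (Wm *m (\matrix_(v, w)
   (e (enum_val v) (enum_val w))%:R - c *: diag_mx (\row_v (deg e (enum_val v))%:R)))) =
   map_mx polyC (degmx R e) *m ((1 + (b * (2 * a - b))%:P * 'X^2) *: 1%:M
        + ((b * (b - a))%:P * 'X^2) *: map_mx polyC (degmx R e)) - 'X *: map_mx polyC (Admx e a b).
  rewrite hD /Wm; apply/matrixP => v w; rewrite !mul_diag_mx !mxE.
  set dn := deg e (enum_val v).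
  have key : dn != 0%N -> (dn%:R : K) * (wv (enum_val v))%:P = ((2 - dn%:R) * a + b * dn%:R)%:P.
    move=> hd; rewrite -polyC_natr -polyCM; congr polyC; rewrite /wv; field.
    by rewrite pnatr_eq0.
  case: (eqVneq v w) => [<-|hvw].
    rewrite eirr /= !mulr1n polyC0 mulr0 subr0 mulr1.
    case: (eqVneq dn 0%N) => hd.
      by rewrite hd mulr0n !mul0r.
    transitivity ((dn%:R : K) * q + 'X * c * (dn%:R * (dn%:R * (wv (enum_val v))%:P))).
      by ring.
    rewrite key // /q /c.
    rewrite !(polyCD, polyCB, polyCM, polyC_exp, polyC_natr).
    ring.
  rewrite /= !mulr0n !mulr0.
  case he : (e (enum_val v) (enum_val w)); last by rewrite polyC0 /= mulr0n; ring.
  have hd : dn != 0%N.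
    apply/eqP => h0; have := card0_eq h0 (enum_val w).
    by rewrite !inE /= he.
  rewrite /= mulr1n.
  transitivity (- 'X * ((dn%:R : K) * (wv (enum_val v))%:P)); first by ring.
  by rewrite key //; ring.
by rewrite hM.
Qed.

End Main.

Unset Implicit Arguments.

Theorem theorem5 (R : realFieldType) (V : finType) (e : rel V) (a b : R) :
  simple_graph e -> connected_graph e -> 0 <= a <= 1 ->
  let n := #|V| in
  let m := nedges e in
  let U := map_mx polyC (grover e a b) in
  let D := map_mx polyC (degmx R e) in
  let Ad := map_mx polyC (Admx e a b) in
  let q := 1 - (b ^+ 2)%:P * 'X^2 : {poly R} in
  (\prod_(v : V) (deg e v)%:R)%:P * \det (1%:M - 'X *: U) * q ^+ n
  = q ^+ m * \det (D *m ((1 + (b * (2 * a - b))%:P * 'X^2) *: 1%:M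
                          + ((b * (b - a))%:P * 'X^2) *: D) - 'X *: Ad).
Proof.
move=> [hs hi] _ _ n m U D Ad q.
exact: (main_sec a b hs hi).
Qed.
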